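(* Let $U\in C([0,1])\cap C^1((0,1])\cap C^2((0,1))$ satisfy $U''>0$ on $(0,1)$, $\lim_{h\downarrow0}U'(h)=-\infty$, $r\mapsto rU''(r)$ non-decreasing on $(0,1)$, and $U(0)=U(1)=0$. Then for all $r,s,t\in[0,1]$ and $r_0\in(0,1]$, \[U((1-t)r+ts)\ge(1-t)U(r)+tU(s)+rU(1-t)+sU(t),\] \[d_U((1-t)r+ts,r_0)\ge(1-t)d_U(r,r_0)+td_U(s,r_0)+rU(1-t)+sU(t).\]
   Context: $d_U(r,r_0)=U(r)-U(r_0)-(r-r_0)U'(r_0)$ for $r\in[0,1]$, $r_0\in(0,1]$. *)

(* Defs.v *)
From Stdlib Require Import Reals.
From Coquelicot Require Import Coquelicot.
Open Scope R_scope.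

(* Bregman-type divergence d_U(r,r0) = U(r) - U(r0) - (r - r0) U'(r0),
   where dU plays the role of U'. *)
Definition d_U (U dU : R -> R) (r r0 : R) : R :=
  U r - U r0 - (r - r0) * dU r0.

(* Main.v *)
Require Import Defs.
From Stdlib Require Import Reals Lra Psatz.
From Coquelicot Require Import Coquelicot.
Open Scope R_scope.

Lemma mvt_strict (f df : R->R) a b : a < b ->
  (forall c, a<c<b -> is_derive f c (df c)) ->
  (forall c, a<=c<=b -> continuity_pt f c) ->
  exists c, a<c<b /\ f b - f a = df c * (b-a).
Proof.
 intros Hab Hd Hc.
 assert (pr1 : forall c, a<c<b -> derivable_pt f c).
 { intros c Hc'. exists (df c). apply is_derive_Reals. apply Hd; auto. }
 assert (pr2 : forall c, a<c<b -> derivable_pt id c) by (intros; apply derivable_pt_id).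
 destruct (MVT f id a b pr1 pr2 Hab Hc (fun c _ => derivable_continuous_pt _ _ (derivable_pt_id c))) as [c [P E]].
 exists c; split; auto.
 rewrite (derive_pt_eq_0 f c (df c) (pr1 c P)) in E. 2: apply is_derive_Reals, Hd; auto.
 rewrite (derive_pt_eq_0 id c 1 (pr2 c P)) in E. 2: apply derivable_pt_lim_id.
 unfold id in E. rewrite Rmult_1_r in E. rewrite <- E. ring.
Qed.

Lemma convex_interp (f df d2f : R -> R) a b x : a < b ->
  (forall y, a<=y<=b -> continuity_pt f y) ->
  (forall y, a<y<b -> is_derive f y (df y)) ->
  (forall y, a<y<b -> is_derive df y (d2f y)) ->
  (forall y, a<y<b -> 0 <= d2f y) ->
  a <= x <= b -> (b-a)*f x <= (b-x)*f a + (x-a)*f b.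
Proof.
 intros Hab Hc Hd Hd2 Hp Hx.
 destruct (Req_dec x a) as [->|Ha]. { right; ring. }
 destruct (Req_dec x b) as [->|Hb]. { right; ring. }
 assert (Hx' : a < x < b) by lra.
 destruct (mvt_strict f df a x) as [c1 [Hc1 E1]]; try lra.
 { intros; apply Hd; lra. } { intros; apply Hc; lra. }
 destruct (mvt_strict f df x b) as [c2 [Hc2 E2]]; try lra.
 { intros; apply Hd; lra. } { intros; apply Hc; lra. }
 assert (M : df c1 <= df c2).
 { destruct (mvt_strict df d2f c1 c2) as [c [Hc' E]]; try lra.
   { intros; apply Hd2; lra. }
   { intros y Hy. apply continuity_pt_filterlim. apply (ex_derive_continuous df y).
     exists (d2f y). apply Hd2; lra. }
   assert (0 <= d2f c) by (apply Hp; lra). nra. }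
 assert (f x - f a <= df c2 * (x - a)) by nra.
 nra.
Qed.
Definition clamp (y : R) := Rmax 0 (Rmin 1 y).

Lemma clamp_in y : 0 <= clamp y <= 1.
Proof. unfold clamp, Rmax, Rmin; repeat destruct Rle_dec; lra. Qed.

Lemma clamp_id y : 0 <= y <= 1 -> clamp y = y.
Proof. intros; unfold clamp, Rmax, Rmin; repeat destruct Rle_dec; lra. Qed.

Lemma clamp_lip x y e : Rabs (y - x) < e -> Rabs (clamp y - clamp x) < e.
Proof.
 intros H. apply Rabs_def2 in H. apply Rabs_def1;
 unfold clamp, Rmax, Rmin; repeat destruct Rle_dec; lra.
Qed.

Lemma clamp_cont (U : R -> R)
  (HUc : forall x, 0 <= x <= 1 ->
     filterlim U (within (fun y => 0 <= y <= 1) (locally x)) (locally (U x))) :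
  forall x, continuity_pt (fun y => U (clamp y)) x.
Proof.
 intros x. apply continuity_pt_filterlim.
 apply (filterlim_comp _ _ _ clamp U (locally x) (within (fun y => 0 <= y <= 1) (locally (clamp x)))).
 - intros A [eps HA]. exists eps. intros y Hy. apply HA.
   + apply clamp_lip. exact Hy.
   + apply clamp_in.
 - apply HUc, clamp_in.
Qed.

Lemma clamp_loc x : 0 < x < 1 -> forall (U : R -> R), locally x (fun y => U y = U (clamp y)).
Proof.
 intros Hx U. assert (Hp : 0 < Rmin x (1 - x)) by (apply Rmin_pos; lra).
 exists (mkposreal _ Hp). intros y Hy. simpl in Hy.
 unfold ball in Hy; simpl in Hy; unfold AbsRing_ball, abs, minus, plus, opp in Hy; simpl in Hy.
 apply Rabs_def2 in Hy. rewrite clamp_id; auto.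
 unfold Rmin in Hy; destruct Rle_dec; lra.
Qed.
Lemma der_conv (f g : R -> R) x l l' : is_derive f x l -> (forall t, f t = g t) -> l = l' -> is_derive g x l'.
Proof. intros D E ->. apply (is_derive_ext f); auto. Qed.

Ltac rcl := unfold minus, plus, opp, scal, zero, one; simpl; unfold mult, plus, opp, zero, one; simpl; ring.

Section Main.
Variables (U dU d2U : R -> R).
Hypothesis HUc : forall x, 0 <= x <= 1 ->
     filterlim U (within (fun y => 0 <= y <= 1) (locally x)) (locally (U x)).
Hypothesis HdU : forall x, 0 < x < 1 -> is_derive U x (dU x).
Hypothesis Hd2U : forall x, 0 < x < 1 -> is_derive dU x (d2U x).
Hypothesis Hpos : forall x, 0 < x < 1 -> 0 < d2U x.
Hypothesis Hmon : forall x y, 0 < x < 1 -> 0 < y < 1 -> x <= y -> x * d2U x <= y * d2U y.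
Hypothesis HU0 : U 0 = 0.
Hypothesis HU1 : U 1 = 0.

Let Ub := fun y => U (clamp y).

Lemma Ub_der x : 0 < x < 1 -> is_derive Ub x (dU x).
Proof. intros Hx. apply (is_derive_ext_loc U). apply clamp_loc; auto. apply HdU; auto. Qed.

Lemma superadd a b : 0 <= a -> 0 <= b -> a + b <= 1 -> U a + U b <= U (a + b).
Proof.
 intros Ha Hb Hab.
 destruct (Req_dec (a+b) 0) as [E|E].
 { assert (a = 0) by lra. assert (b = 0) by lra. subst. rewrite Rplus_0_r, HU0. lra. }
 assert (K : forall x, 0 <= x <= a + b -> (a+b) * U x <= x * U (a+b)).
 { intros x Hx.
   assert (C := convex_interp Ub dU d2U 0 (a+b) x ltac:(lra)
     (fun y _ => clamp_cont U HUc y) (fun y Hy => Ub_der y ltac:(lra))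
     (fun y Hy => Hd2U y ltac:(lra)) (fun y Hy => Rlt_le _ _ (Hpos y ltac:(lra))) Hx).
   unfold Ub in C. rewrite !clamp_id in C by lra. rewrite HU0 in C. lra. }
 pose proof (K a ltac:(lra)). pose proof (K b ltac:(lra)).
 assert ((a+b) * (U a + U b) <= (a+b) * U (a+b)) by lra.
 apply Rmult_le_reg_l with (a+b); lra.
Qed.

Lemma scale_ineq lam r : 0 <= lam <= 1 -> 0 <= r <= 1 -> lam * U r + r * U lam <= U (lam * r).
Proof.
 intros Hl Hr.
 destruct (Req_dec lam 0) as [->|L0]. { replace (0*r) with 0 by ring. rewrite HU0. lra. }
 destruct (Req_dec lam 1) as [->|L1]. { replace (1*r) with r by ring. rewrite HU1. lra. }
 set (psi := fun y => lam * Ub y + y * U lam - Ub (lam * y)).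
 set (dpsi := fun y => lam * dU y + U lam - lam * dU (lam * y)).
 set (d2psi := fun y => lam * d2U y - lam * (lam * d2U (lam * y))).
 assert (P1 : forall y, 0 <= y <= 1 -> continuity_pt psi y).
 { intros y Hy. unfold psi. apply continuity_pt_minus. apply continuity_pt_plus.
   + apply continuity_pt_scal. apply clamp_cont; auto.
   + apply continuity_pt_mult. apply continuity_pt_id. apply continuity_pt_const. intros ? ?; auto.
   + apply (continuity_pt_comp (fun y => lam * y) Ub).
     * apply continuity_pt_scal, continuity_pt_id.
     * apply clamp_cont; auto. }
 assert (P2 : forall y, 0 < y < 1 -> is_derive psi y (dpsi y)).
 { intros y Hy. unfold psi, dpsi.
   assert (D1 := is_derive_scal _ _ lam _ (Ub_der y Hy)).
   assert (D2 := is_derive_scal_l _ _ _ (U lam) (@is_derive_id R_AbsRing y)).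
   assert (D3 := is_derive_comp Ub (fun y => lam * y) y _ _ (Ub_der (lam*y) ltac:(nra))
                  (is_derive_scal _ _ lam _ (@is_derive_id R_AbsRing y))).
   assert (D := is_derive_minus _ _ _ _ _ (is_derive_plus _ _ _ _ _ D1 D2) D3).
   apply (der_conv _ _ _ _ _ D); [intros t|]; rcl. }
 assert (P3 : forall y, 0 < y < 1 -> is_derive dpsi y (d2psi y)).
 { intros y Hy. unfold dpsi, d2psi.
   assert (D1 := is_derive_scal _ _ lam _ (Hd2U y Hy)).
   assert (D2 := @is_derive_const R_AbsRing R_NormedModule (U lam) y).
   assert (D3 := is_derive_comp dU (fun y => lam * y) y _ _ (Hd2U (lam*y) ltac:(nra))
                  (is_derive_scal _ _ lam _ (@is_derive_id R_AbsRing y))).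
   assert (D3' := is_derive_scal _ _ lam _ D3).
   assert (D := is_derive_minus _ _ _ _ _ (is_derive_plus _ _ _ _ _ D1 D2) D3').
   apply (der_conv _ _ _ _ _ D); [intros t|]; rcl. }
 assert (P4 : forall y, 0 < y < 1 -> 0 <= d2psi y).
 { intros y Hy. unfold d2psi.
   assert (H := Hmon (lam * y) y ltac:(nra) ltac:(lra) ltac:(nra)).
   assert (0 <= y * (lam * d2U y - lam * (lam * d2U (lam * y)))) by nra.
   apply Rmult_le_reg_l with y; lra. }
 assert (C := convex_interp psi dpsi d2psi 0 1 r ltac:(lra) P1 P2 P3 P4 Hr).
 unfold psi, Ub in C. rewrite !Rmult_0_r, !Rmult_1_r, !clamp_id in C by nra.
 rewrite HU0, HU1 in C. lra.
Qed.
End Main.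

Theorem lemma3p2 (U dU d2U : R -> R)
  (* U in C([0,1]) *)
  (HUc : forall x, 0 <= x <= 1 ->
     filterlim U (within (fun y => 0 <= y <= 1) (locally x)) (locally (U x)))
  (* U in C^1((0,1]) : U' = dU on (0,1), left derivative dU 1 at 1,
     dU continuous on (0,1] *)
  (HdU : forall x, 0 < x < 1 -> is_derive U x (dU x))
  (HdU1 : filterlim (fun h => (U h - U 1) / (h - 1)) (at_left 1) (locally (dU 1)))
  (HdUc : forall x, 0 < x <= 1 ->
     filterlim dU (within (fun y => 0 < y <= 1) (locally x)) (locally (dU x)))
  (* U in C^2((0,1)) : U'' = d2U on (0,1), continuous there *)
  (Hd2U : forall x, 0 < x < 1 -> is_derive dU x (d2U x))
  (Hd2Uc : forall x, 0 < x < 1 -> continuous d2U x)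
  (* U'' > 0 on (0,1) *)
  (Hpos : forall x, 0 < x < 1 -> 0 < d2U x)
  (* lim_{h -> 0+} U'(h) = -oo *)
  (Hlim : filterlim dU (at_right 0) (Rbar_locally m_infty))
  (* r |-> r U''(r) non-decreasing on (0,1) *)
  (Hmon : forall x y, 0 < x < 1 -> 0 < y < 1 -> x <= y -> x * d2U x <= y * d2U y)
  (HU0 : U 0 = 0) (HU1 : U 1 = 0) :
  forall r s t r0 : R,
    0 <= r <= 1 -> 0 <= s <= 1 -> 0 <= t <= 1 -> 0 < r0 <= 1 ->
    U ((1 - t) * r + t * s) >= (1 - t) * U r + t * U s + r * U (1 - t) + s * U t /\
    d_U U dU ((1 - t) * r + t * s) r0 >=
      (1 - t) * d_U U dU r r0 + t * d_U U dU s r0 + r * U (1 - t) + s * U t.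
Proof.
 intros r s t r0 Hr Hs Ht Hr0.
 assert (A : U ((1 - t) * r + t * s) >= (1 - t) * U r + t * U s + r * U (1 - t) + s * U t).
 { assert (S1 := superadd U dU d2U HUc HdU Hd2U Hpos HU0 ((1-t)*r) (t*s) ltac:(nra) ltac:(nra) ltac:(nra)).
   assert (S2 := scale_ineq U dU d2U HUc HdU Hd2U Hmon HU0 HU1 (1-t) r ltac:(lra) Hr).
   assert (S3 := scale_ineq U dU d2U HUc HdU Hd2U Hmon HU0 HU1 t s Ht Hs).
   lra. }
 split; auto.
 assert (E : (1 - t) * d_U U dU r r0 + t * d_U U dU s r0 =
   (1-t) * U r + t * U s - U r0 - ((1 - t) * r + t * s - r0) * dU r0) by (unfold d_U; ring).
 rewrite E. unfold d_U. lra.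
Qed.
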